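(* Let $(X,d)$ be a metric space, let $k\in[0,1)$, let $S,T:X\to X$ be mappings, and let $\phi:[0,+\infty)\to[0,+\infty)$ be a nonnegative Lebesgue-integrable function, summable on each compact subset of $[0,+\infty)$, such that $\int_0^{\epsilon}\phi(t)\,dt>0$ for each $\epsilon>0$. Suppose that for all $x,y\in X$, \[\int_0^{d(TSx,TSy)}\phi(t)\,dt\le k\int_0^{m'(Tx,Ty)}\phi(t)\,dt,\] where $m'(Tx,Ty)=\max\{d(Tx,Ty),d(Tx,TSx),d(Ty,TSy),\tfrac{d(Tx,TSy)+d(Ty,TSx)}{2}\}$. Fix $x\in X$ and put $x_n=TS^nx$ for $n\ge 0$. Then the sequence $\{x_n\}$ is bounded.
   Context: $S^n$ denotes the $n$-fold iterate of $S$ ($S^0$ the identity). *)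

(* Defs.v *)
From Stdlib Require Import Reals List.
Open Scope R_scope.

(* Lebesgue integral of a NONNEGATIVE function on a compact interval [a,b],
   realised as the Henstock-Kurzweil (gauge) integral: for nonnegative
   functions, HK-integrability coincides with Lebesgue integrability, with
   the same value. *)

(* A tagged division of [a,b] is a list of (tag, right endpoint) pairs.
   [fine delta a b l]: l is a tagged division of [a,b] that is delta-fine. *)
Fixpoint fine (delta : R -> R) (a b : R) (l : list (R * R)) : Prop :=
  match l with
  | nil => a = b
  | (t, c) :: l' =>
      a <= t /\ t <= c /\ t - delta t < a /\ c < t + delta t /\ fine delta c b l'
  end.

Fixpoint rsum (f : R -> R) (a : R) (l : list (R * R)) : R :=
  match l with
  | nil => 0
  | (t, c) :: l' => f t * (c - a) + rsum f c l'
  end.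

Definition integral_on (f : R -> R) (a b I : R) : Prop :=
  forall eps : R, 0 < eps ->
    exists delta : R -> R, (forall x, 0 < delta x) /\
      forall l, fine delta a b l -> Rabs (rsum f a l - I) < eps.

Definition mprime {X : Type} (d : X -> X -> R) (S T : X -> X) (x y : X) : R :=
  Rmax (Rmax (d (T x) (T y)) (d (T x) (T (S x))))
       (Rmax (d (T y) (T (S y))) ((d (T x) (T (S y)) + d (T y) (T (S x))) / 2)).

(* Main.v *)
Require Import Defs.
From Stdlib Require Import Reals List Lra Lia Classical Arith ClassicalEpsilon.
Open Scope R_scope.

Lemma fine_app delta a y z l1 l2 :
  fine delta a y l1 -> fine delta y z l2 -> fine delta a z (l1 ++ l2).
Proof.
  revert a; induction l1 as [|[t c] l1 IH]; intros a H1 H2; simpl in *.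
  - subst; auto.
  - destruct H1 as (?&?&?&?&?); repeat split; auto.
Qed.

Lemma rsum_app f delta a y l1 l2 :
  fine delta a y l1 -> rsum f a (l1 ++ l2) = rsum f a l1 + rsum f y l2.
Proof.
  revert a; induction l1 as [|[t c] l1 IH]; intros a H1; simpl in *.
  - subst; lra.
  - destruct H1 as (?&?&?&?&?). rewrite (IH c); auto. lra.
Qed.

Lemma rsum_nonneg f delta a b l :
  (forall t, 0 <= t -> 0 <= f t) -> 0 <= a -> fine delta a b l -> 0 <= rsum f a l.
Proof.
  intros Hf; revert a; induction l as [|[t c] l IH]; intros a Ha H1; simpl in *.
  - lra.
  - destruct H1 as (?&?&?&?&?).
    assert (0 <= f t) by (apply Hf; lra).
    assert (0 <= rsum f c l) by (apply IH; auto; lra).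
    assert (0 <= f t * (c - a)) by (apply Rmult_le_pos; lra). lra.
Qed.

Lemma fine_mono d1 d2 a b l :
  (forall x, d1 x <= d2 x) -> fine d1 a b l -> fine d2 a b l.
Proof.
  intros Hd; revert a; induction l as [|[t c] l IH]; intros a H1; simpl in *; auto.
  destruct H1 as (?&?&?&?&?). specialize (Hd t). repeat split; auto; lra.
Qed.

Lemma cousin delta a b : (forall x, 0 < delta x) -> a <= b ->
  exists l, fine delta a b l.
Proof.
  intros Hd Hab.
  set (E := fun x => a <= x <= b /\ exists l, fine delta a x l).
  assert (HB : bound E) by (exists b; intros x [Hx _]; lra).
  assert (HE : exists x, E x) by (exists a; split; [lra| exists nil; simpl; auto]).
  destruct (completeness E HB HE) as [s [Hs1 Hs2]].
  assert (Has : a <= s) by (apply Hs1; destruct HE as [? _]; split; [lra|exists nil; simpl; auto]).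
  assert (Hsb : s <= b) by (apply Hs2; intros x [Hx _]; lra).
  assert (Hin : exists l, fine delta a s l).
  { destruct (classic (exists y, E y /\ s - delta s < y)) as [[y [[Hy [l Hl]] Hy2]]|Hn].
    - assert (y <= s) by (apply Hs1; split; [lra| exists l; auto]).
      exists (l ++ (s, s) :: nil). apply fine_app with y; auto.
      simpl. specialize (Hd s). repeat split; lra.
    - exfalso. assert (s <= s - delta s).
      { apply Hs2. intros y Hy. apply Rnot_lt_le. intro. apply Hn. exists y; auto. }
      specialize (Hd s); lra. }
  destruct (Rle_lt_or_eq_dec s b Hsb) as [Hlt|Heq].
  - exfalso. destruct Hin as [l Hl].
    set (c := Rmin b (s + delta s / 2)).
    assert (Hc1 : s < c). { unfold c. specialize (Hd s). apply Rmin_glb_lt; lra. }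
    assert (Hc2 : c <= b) by apply Rmin_l.
    assert (Hc3 : c <= s + delta s / 2) by apply Rmin_r.
    assert (c <= s).
    { apply Hs1. split; [lra|]. exists (l ++ (s, c) :: nil). apply fine_app with s; auto.
      simpl. specialize (Hd s). repeat split; lra. }
    lra.
  - subst; auto.
Qed.

Lemma integral_mono f a b I J :
  (forall t, 0 <= t -> 0 <= f t) -> 0 <= a -> a <= b ->
  integral_on f 0 a I -> integral_on f 0 b J -> I <= J.
Proof.
  intros Hf Ha Hab HI HJ. apply Rnot_lt_le; intro HJI.
  destruct (HI ((I - J)/2) ltac:(lra)) as [d1 [Hd1 H1]].
  destruct (HJ ((I - J)/2) ltac:(lra)) as [d2 [Hd2 H2]].
  set (dl := fun x => Rmin (d1 x) (d2 x)).
  assert (Hdl : forall x, 0 < dl x) by (intro x; unfold dl; apply Rmin_glb_lt; auto).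
  destruct (cousin dl 0 a Hdl Ha) as [l1 Hl1].
  destruct (cousin dl a b Hdl Hab) as [l2 Hl2].
  assert (F1 : fine d1 0 a l1) by (apply fine_mono with dl; auto; intro; apply Rmin_l).
  assert (F2 : fine d2 0 b (l1 ++ l2)).
  { apply fine_mono with dl; [intro; apply Rmin_r|]. apply fine_app with a; auto. }
  specialize (H1 l1 F1). specialize (H2 _ F2).
  rewrite (rsum_app f dl 0 a l1 l2 Hl1) in H2.
  assert (0 <= rsum f a l2) by (apply rsum_nonneg with dl b; auto).
  apply Rabs_def2 in H1. apply Rabs_def2 in H2. lra.
Qed.

Section Abs.
Variables (X : Type) (d : X -> X -> R)
  (d_nonneg : forall x y, 0 <= d x y)
  (d_eq0 : forall x y, d x y = 0 <-> x = y)
  (d_sym : forall x y, d x y = d y x)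
  (d_tri : forall x y z, d x z <= d x y + d y z)
  (k : R) (hk : 0 <= k < 1) (F : R -> R)
  (Fmono : forall a b, 0 <= a -> a <= b -> F a <= F b)
  (Fpos : forall a, 0 < a -> 0 < F a)
  (y : nat -> X)
  (H : forall n m, F (d (y (S n)) (y (S m))) <= k * F (Rmax (Rmax (d (y n) (y m)) (d (y n) (y (S n)))) (Rmax (d (y m) (y (S m))) ((d (y n) (y (S m)) + d (y m) (y (S n)))/2)))).

Let a n := d (y n) (y (S n)).

Lemma dself z : d z z = 0. Proof. apply d_eq0; auto. Qed.

Lemma step1 n : a (S n) <= a n /\ F (a (S n)) <= k * F (a n).
Proof.
  pose proof (H n (S n)) as Hn. rewrite dself in Hn.
  fold (a n) in Hn. fold (a (S n)) in Hn.
  set (Mx := Rmax _ _) in Hn.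
  assert (Hd2 : d (y n) (y (S (S n))) <= a n + a (S n)) by apply d_tri.
  assert (HM0 : 0 <= Mx) by (unfold Mx; eapply Rle_trans; [|apply Rmax_l]; eapply Rle_trans; [|apply Rmax_l]; apply d_nonneg).
  assert (HM : Mx <= Rmax (a n) (a (S n))).
  { unfold Mx. pose proof (Rmax_l (a n) (a (S n))). pose proof (Rmax_r (a n) (a (S n))).
    repeat apply Rmax_lub; lra. }
  pose proof (Fmono _ _ HM0 HM) as HF.
  destruct (Rle_or_lt (a (S n)) (a n)) as [Hle|Hlt].
  - rewrite Rmax_left in HF by lra. split; auto.
    assert (k * F Mx <= k * F (a n)) by (apply Rmult_le_compat_l; lra). lra.
  - exfalso. rewrite Rmax_right in HF by lra.
    assert (0 <= a n) by apply d_nonneg.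
    assert (0 < F (a (S n))) by (apply Fpos; lra).
    assert (k * F Mx <= k * F (a (S n))) by (apply Rmult_le_compat_l; lra). nra.
Qed.

Lemma step2 n : F (a n) <= k ^ n * F (a 0).
Proof.
  induction n; simpl. lra.
  destruct (step1 n) as [_ H2].
  assert (k * F (a n) <= k * (k ^ n * F (a 0))) by (apply Rmult_le_compat_l; lra). lra.
Qed.

Lemma amono i j : (i <= j)%nat -> a j <= a i.
Proof. induction 1. lra. pose proof (step1 m). lra. Qed.

Lemma step3 eta : 0 < eta -> exists N, forall i, (N <= i)%nat -> a i <= eta.
Proof.
  intros He. destruct (classic (exists N, a N <= eta)) as [[N HN]|Hn].
  - exists N; intros i Hi. pose proof (amono _ _ Hi). lra.
  - exfalso.
    assert (Hall : forall N, eta < a N) by (intro N; apply Rnot_le_lt; intro; apply Hn; eauto).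
    assert (HFe : 0 < F eta) by auto.
    assert (HF0 : F eta <= F (a 0)) by (apply Fmono; try lra; apply Rlt_le, Hall).
    destruct (pow_lt_1_zero k ltac:(rewrite Rabs_right; lra) (F eta / F (a 0))) as [N HN].
    { apply Rdiv_lt_0_compat; lra. }
    specialize (HN N (le_n _)).
    rewrite Rabs_right in HN by (apply Rle_ge, pow_le; lra).
    pose proof (step2 N).
    assert (F eta <= F (a N)) by (apply Fmono; try lra; apply Rlt_le, Hall).
    apply (Rmult_lt_compat_r (F (a 0))) in HN; [|lra].
    unfold Rdiv in HN. rewrite Rmult_assoc, Rinv_l in HN by lra. lra.
Qed.

Lemma scale : exists t e, 0 < e /\ 0 <= t - 2 * e /\ k * F (t + e) < F (t - 2 * e).
Proof.
  assert (HF2 : 0 < F 2) by (apply Fpos; lra).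
  assert (HF3 : 0 < F (1/3)) by (apply Fpos; lra).
  destruct (pow_lt_1_zero k ltac:(rewrite Rabs_right; lra) (F (1/3) / F 2)) as [N0 HN].
  { apply Rdiv_lt_0_compat; lra. }
  set (N := Nat.max N0 1).
  specialize (HN N ltac:(unfold N; lia)).
  rewrite Rabs_right in HN by (apply Rle_ge, pow_le; lra).
  assert (HNpos : 1 <= INR N) by (replace 1 with (INR 1) by reflexivity; apply le_INR; unfold N; lia).
  set (e := 1 / (3 * INR N)).
  assert (He : 0 < e) by (unfold e; apply Rdiv_lt_0_compat; lra).
  assert (He3 : e * (3 * INR N) = 1) by (unfold e; field; lra).
  assert (He13 : e <= 1/3).
  { unfold e. apply Rmult_le_reg_r with (3 * INR N); [lra|].
    unfold Rdiv. rewrite Rmult_assoc, Rinv_l by lra. nra. }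
  apply NNPP; intro Hn.
  assert (Hall : forall t, 0 <= t - 2 * e -> F (t - 2 * e) <= k * F (t + e)).
  { intros t Ht. apply Rnot_lt_le. intro. apply Hn. exists t, e. auto. }
  assert (Hi : forall i, F (1 - 2 * e) <= k ^ i * F (1 - 2 * e + 3 * e * INR i)).
  { induction i. simpl. replace (1 - 2*e + 3*e*0) with (1 - 2*e) by ring. lra.
    rewrite S_INR. simpl.
    pose proof (pos_INR i).
    pose proof (Hall (1 + 3 * e * INR i) ltac:(nra)) as Hs.
    replace (1 + 3 * e * INR i - 2 * e) with (1 - 2 * e + 3 * e * INR i) in Hs by ring.
    replace (1 + 3 * e * INR i + e) with (1 - 2 * e + 3 * e * (INR i + 1)) in Hs by ring.
    assert (0 <= k ^ i) by (apply pow_le; lra).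
    assert (k ^ i * F (1 - 2 * e + 3 * e * INR i) <= k ^ i * (k * F (1 - 2 * e + 3 * e * (INR i + 1)))) by (apply Rmult_le_compat_l; lra).
    lra. }
  specialize (Hi N).
  replace (1 - 2 * e + 3 * e * INR N) with (2 - 2 * e) in Hi by lra.
  assert (F (2 - 2*e) <= F 2) by (apply Fmono; lra).
  assert (F (1/3) <= F (1 - 2*e)) by (apply Fmono; lra).
  assert (0 <= k ^ N) by (apply pow_le; lra).
  assert (k ^ N * F (2 - 2*e) <= k ^ N * F 2) by (apply Rmult_le_compat_l; lra).
  apply (Rmult_lt_compat_r (F 2)) in HN; [|lra].
  unfold Rdiv in HN. rewrite Rmult_assoc, Rinv_l in HN by lra. lra.
Qed.

Lemma dist_bound j p : d (y j) (y (j + p)) <= INR p * a 0.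
Proof.
  induction p. rewrite Nat.add_0_r, dself. simpl; lra.
  rewrite S_INR. eapply Rle_trans; [apply (d_tri _ (y (j + p)))|].
  rewrite Nat.add_succ_r. pose proof (amono 0 (j + p) ltac:(lia)). unfold a in *. lra.
Qed.

Lemma crossing N c : 0 < c -> forall p, c <= d (y N) (y (N + p)) ->
  exists q, c <= d (y N) (y (N + S q)) /\ d (y N) (y (N + q)) < c.
Proof.
  intros Hc; induction p; intros Hp.
  - rewrite Nat.add_0_r, dself in Hp. lra.
  - destruct (Rle_or_lt c (d (y N) (y (N + p)))) as [Hle|Hlt]; auto.
    exists p; auto.
Qed.

Lemma abs_main : exists M, forall n m, d (y n) (y m) <= M.
Proof.
  apply NNPP; intro Hub.
  destruct scale as [t [e [He [Ht Hk]]]].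
  destruct (step3 (e/2) ltac:(lra)) as [N HN].
  assert (Hex : exists p, t < d (y N) (y (N + p))).
  { apply NNPP; intro Hn. apply Hub.
    exists (2 * (t + INR N * a 0)).
    assert (Hb : forall m, d (y N) (y m) <= t + INR N * a 0).
    { intro m. assert (0 <= a 0) by apply d_nonneg.
      pose proof (pos_INR N).
      destruct (le_lt_dec N m) as [Hm|Hm].
      - replace m with (N + (m - N))%nat by lia.
        assert (d (y N) (y (N + (m - N))) <= t) by (apply Rnot_lt_le; intro; apply Hn; eauto). nra.
      - rewrite d_sym. replace N with (m + (N - m))%nat at 1 by lia.
        eapply Rle_trans; [apply dist_bound|].
        assert (INR (N - m) <= INR N) by (apply le_INR; lia). nra. }
    intros n m. eapply Rle_trans; [apply (d_tri _ (y N))|]. rewrite d_sym.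
    pose proof (Hb n); pose proof (Hb m); lra. }
  destruct Hex as [p Hp].
  destruct (crossing N (t - e/2) ltac:(lra) p ltac:(lra)) as [q [Hq1 Hq2]].
  rewrite Nat.add_succ_r in Hq1.
  set (m := (N + q)%nat) in *.
  assert (HaN : a N <= e/2) by (apply HN; lia).
  assert (Ham : a m <= e/2) by (apply HN; unfold m; lia).
  assert (Ham1 : a (S m) <= e/2) by (apply HN; unfold m; lia).
  set (D := d (y N) (y (S m))).
  change (t - e / 2 <= D) in Hq1.
  assert (HD : D <= d (y N) (y m) + a m) by apply d_tri.
  pose proof (H N (S m)) as HH.
  set (Mx := Rmax _ _) in HH.
  assert (HM0 : 0 <= Mx) by (unfold Mx; eapply Rle_trans; [|apply Rmax_l]; eapply Rle_trans; [|apply Rmax_l]; apply d_nonneg).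
  assert (HM : Mx <= t + e).
  { unfold Mx. fold D. fold (a N). fold (a (S m)).
    assert (d (y N) (y (S (S m))) <= D + a (S m)) by apply d_tri.
    assert (d (y (S m)) (y (S N)) <= d (y (S m)) (y N) + a N) by apply d_tri.
    rewrite (d_sym (y (S m)) (y N)) in H1.
    assert (0 <= a N) by apply d_nonneg. assert (0 <= a (S m)) by apply d_nonneg.
    change (d (y N) (y (S m))) with D in H1.
    repeat apply Rmax_lub; lra. }
  assert (HL : t - 2 * e <= d (y (S N)) (y (S (S m)))).
  { assert (D <= d (y N) (y (S N)) + d (y (S N)) (y (S m))) by apply d_tri.
    assert (d (y (S N)) (y (S m)) <= d (y (S N)) (y (S (S m))) + d (y (S (S m))) (y (S m))) by apply d_tri.
    rewrite (d_sym (y (S (S m)))) in *. fold (a N) in *. fold (a (S m)) in *. lra. }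
  assert (F1 : F (t - 2 * e) <= F (d (y (S N)) (y (S (S m))))) by (apply Fmono; lra).
  assert (F2 : F Mx <= F (t + e)) by (apply Fmono; lra).
  assert (k * F Mx <= k * F (t + e)) by (apply Rmult_le_compat_l; lra).
  lra.
Qed.
End Abs.

Theorem mainTheorem3 (X : Type) (d : X -> X -> R)
  (d_nonneg : forall x y, 0 <= d x y)
  (d_eq0 : forall x y, d x y = 0 <-> x = y)
  (d_sym : forall x y, d x y = d y x)
  (d_tri : forall x y z, d x z <= d x y + d y z)
  (k : R) (hk : 0 <= k < 1)
  (S T : X -> X)
  (phi : R -> R)
  (phi_nonneg : forall t, 0 <= t -> 0 <= phi t)
  (phi_loc_int : forall s, 0 <= s -> exists I, integral_on phi 0 s I)
  (phi_pos : forall eps, 0 < eps -> forall I, integral_on phi 0 eps I -> 0 < I)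
  (contr : forall x y I1 I2,
      integral_on phi 0 (d (T (S x)) (T (S y))) I1 ->
      integral_on phi 0 (mprime d S T x y) I2 ->
      I1 <= k * I2)
  (x : X) :
  exists M : R, forall n m : nat,
    d (T (Nat.iter n S x)) (T (Nat.iter m S x)) <= M.
Proof.
  assert (Hex : forall s, exists I, integral_on phi 0 (Rmax 0 s) I)
    by (intro s; apply phi_loc_int, Rmax_l).
  set (F := fun s => proj1_sig (constructive_indefinite_description _ (Hex s))).
  assert (HF : forall s, 0 <= s -> integral_on phi 0 s (F s)).
  { intros s Hs. unfold F. destruct (constructive_indefinite_description _ (Hex s)) as [I HI]; simpl.
    rewrite Rmax_right in HI; auto. }
  pose (yy := fun j : nat => T (Nat.iter j S x)).
  change (exists M : R, forall n m : nat, d (yy n) (yy m) <= M).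
  apply abs_main with (F := F) (y := yy) (k := k); auto.
  - intros a b Ha Hab. apply (integral_mono phi a b); auto. apply HF; lra.
  - intros a Ha. apply (phi_pos a Ha). apply HF; lra.
  - intros n m.
    assert (Hm : 0 <= mprime d S T (Nat.iter n S x) (Nat.iter m S x)).
    { unfold mprime. eapply Rle_trans; [|apply Rmax_l].
      eapply Rle_trans; [|apply Rmax_l]. apply d_nonneg. }
    exact (contr (Nat.iter n S x) (Nat.iter m S x) _ _ (HF _ (d_nonneg _ _)) (HF _ Hm)).
Qed.
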